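(* Let $D$ be a unique factorization domain and $D'=D_{mult}/\sim$. For every nonzero element $[m]_\sim$ of $D'$, $\tau'_{[m]_\sim}=P_{J([m]_\sim)}$, and hence the factor semigroup $D'/\tau'_{[m]_\sim}$ satisfies Condition $( * )$.
   Context: $D_{mult}$ is the multiplicative semigroup of $D$, $\sim$ the associate congruence, $[x]_\sim$ the class of $x$; $\gcd([a]_\sim,[b]_\sim)=[\gcd(a,b)]_\sim$ in $D'$. $\tau'_{[m]_\sim}$ is the relation on $D'$ with $([a]_\sim,[b]_\sim)\in\tau'_{[m]_\sim}$ iff $\gcd([a]_\sim,[m]_\sim)=\gcd([b]_\sim,[m]_\sim)$. $J([m]_\sim)$ is the ideal of $D'$ generated by $[m]_\sim$. For a semigroup $S$, $H\subseteq S$, $a\in S$: $H\dots a=\{(x,y)\in S\times S: xay\in H\}$, $P_H=\{(a,b)\in S\times S: H\dots a=H\dots b\}$. For a commutative semigroup $S$ with zero $0$, $A(s)=\{x\in S: xs=0\}$. $S$ satisfies Condition $( * )$ if: (1) $S$ is a commutative monoid with a zero; (2) $A(s)\neq\{0\}$ for every non-identity $s$; (3) $A(s)=A(t)$ implies $s=t$. *)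

(* Defs.v *)
From HB Require Import structures.
From mathcomp Require Import all_boot all_algebra.
From Stdlib Require Import ClassicalEpsilon.
Set Implicit Arguments. Unset Strict Implicit. Unset Printing Implicit Defensive.
Import GRing.Theory.
Local Open Scope ring_scope.

Section Semigroup.
Variables (T : Type) (op : T -> T -> T).

Definition dots (H : T -> Prop) (a : T) : T * T -> Prop :=
  fun p => H (op (op p.1 a) p.2).

Definition P_rel (H : T -> Prop) (a b : T) : Prop := dots H a = dots H b.

(* J(a): the (two-sided) ideal generated by a, i.e. S^1 a S^1 *)
Definition ideal_gen (a : T) : T -> Prop :=
  fun x => x = a \/ (exists s, x = op s a) \/ (exists s, x = op a s)
           \/ (exists s t, x = op (op s a) t).

Definition annih (z s : T) : T -> Prop := fun x => op x s = z.

Definition condition_star : Prop :=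
  (forall x y w, op x (op y w) = op (op x y) w) /\
  (forall x y, op x y = op y x) /\
  exists e z : T,
    (forall x, op e x = x /\ op x e = x) /\
    (forall x, op z x = z /\ op x z = z) /\
    (forall s, s <> e -> annih z s <> (fun x => x = z)) /\
    (forall s t, annih z s = annih z t -> s = t).

(* Factor (quotient) structure by a relation R: classes as predicates. *)
Definition quot (R : T -> T -> Prop) := {P : T -> Prop | exists a, P = R a}.

Definition cls (R : T -> T -> Prop) (a : T) : quot R :=
  exist (fun P => exists a', P = R a') (R a) (ex_intro _ a erefl).

Definition repr (R : T -> T -> Prop) (X : quot R) : T :=
  proj1_sig (constructive_indefinite_description _ (proj2_sig X)).

(* induced operation on classes (well defined when R is a congruence) *)
Definition qop (R : T -> T -> Prop) (X Y : quot R) : quot R :=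
  cls R (op (repr X) (repr Y)).

End Semigroup.

Section Ring.
Variable D : idomainType.

Definition associates (a b : D) : Prop := exists2 u, u \is a GRing.unit & a = u * b.

Definition irreducible_elt (a : D) : Prop :=
  a != 0 /\ a \isn't a GRing.unit /\
  forall b c, a = b * c -> b \is a GRing.unit \/ c \is a GRing.unit.

Definition is_UFD : Prop :=
  (forall a : D, a != 0 -> a \isn't a GRing.unit ->
     exists s : seq D, (forall x, x \in s -> irreducible_elt x) /\ a = \prod_(x <- s) x) /\
  (forall s t : seq D,
     (forall x, x \in s -> irreducible_elt x) ->
     (forall x, x \in t -> irreducible_elt x) ->
     \prod_(x <- s) x = \prod_(x <- t) x ->
     exists t' : seq D, perm_eq t t' /\ size s = size t' /\
       forall i, (i < size s)%N -> associates (nth 0 s i) (nth 0 t' i)).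

Definition dvd (a b : D) : Prop := exists c, b = c * a.

Definition is_gcd (g a b : D) : Prop :=
  dvd g a /\ dvd g b /\ forall d, dvd d a -> dvd d b -> dvd d g.

Definition Dp := quot associates.
Definition Dcls (a : D) : Dp := cls associates a.
Definition Dmul : Dp -> Dp -> Dp := @qop D (@GRing.mul D) associates.

(* tau'_M : ([a],[b]) in tau'_M iff gcd([a],M) = gcd([b],M), where
   gcd([a],[m]) = [gcd(a,m)]. *)
Definition tau' (M X Y : Dp) : Prop :=
  exists a b m ga gb, X = Dcls a /\ Y = Dcls b /\ M = Dcls m /\
    is_gcd ga a m /\ is_gcd gb b m /\ Dcls ga = Dcls gb.

End Ring.

(* Main.v *)
Require Import Defs.
From mathcomp Require Import all_boot all_algebra.
From mathcomp Require Import ring.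
From Stdlib Require Import ClassicalEpsilon Classical ProofIrrelevance FunctionalExtensionality PropExtensionality.
Set Implicit Arguments. Unset Strict Implicit. Unset Printing Implicit Defensive.
Import GRing.Theory.
Local Open Scope ring_scope.

Lemma sig_eq (A : Type) (P : A -> Prop) (x y : {a | P a}) :
  proj1_sig x = proj1_sig y -> x = y.
Proof. case: x => a pa; case: y => b pb /= E; subst b; f_equal; apply: proof_irrelevance. Qed.

Section Quot.
Variables (T : Type) (op : T -> T -> T) (R : T -> T -> Prop).

Lemma cls_repr (X : quot R) : cls R (Defs.repr X) = X.
Proof.
apply: sig_eq; rewrite /Defs.repr /=.
by case: (constructive_indefinite_description _ _) => r /= ->.
Qed.

Hypothesis Rrefl : forall x, R x x.
Hypothesis Rsym : forall x y, R x y -> R y x.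
Hypothesis Rtrans : forall x y z, R x y -> R y z -> R x z.

Lemma cls_eq a b : cls R a = cls R b <-> R a b.
Proof.
split.
- move=> H; have E : R a = R b by exact: (f_equal (@proj1_sig _ _) H).
  by rewrite E.
- move=> H; apply: sig_eq => /=; apply: functional_extensionality => x.
  apply: propositional_extensionality; split => ?; eauto.
Qed.

Lemma repr_cls a : R (Defs.repr (cls R a)) a.
Proof. by apply/cls_eq; rewrite cls_repr. Qed.

Hypothesis Rcong : forall a a' b b', R a a' -> R b b' -> R (op a b) (op a' b').

Lemma qop_cls a b : @qop _ op R (cls R a) (cls R b) = cls R (op a b).
Proof. rewrite /qop; apply/cls_eq; apply: Rcong; exact: repr_cls. Qed.
End Quot.

Section UFD.
Variable D : idomainType.

Lemma dvd_refl (a : D) : dvd a a. Proof. by exists 1; rewrite mul1r. Qed.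
Lemma dvd_trans (a b c : D) : dvd a b -> dvd b c -> dvd a c.
Proof. move=> [x ->] [y ->]; exists (y*x); by rewrite mulrA. Qed.
Lemma dvd_mull (a b c : D) : dvd a b -> dvd a (c * b).
Proof. move=> [x ->]; exists (c*x); by rewrite mulrA. Qed.
Lemma dvd_mulr (a b c : D) : dvd a b -> dvd a (b * c).
Proof. move=> [x ->]; exists (x*c); by rewrite mulrAC. Qed.
Lemma dvd0 (a : D) : dvd a 0. Proof. by exists 0; rewrite mul0r. Qed.
Lemma dvd_unit (a b : D) : a \is a GRing.unit -> dvd a b.
Proof. move=> ua; exists (b / a); by rewrite mulrVK. Qed.
Lemma dvd_unit_r (d u : D) : u \is a GRing.unit -> dvd d u -> d \is a GRing.unit.
Proof. by move=> uu [k Hk]; move: uu; rewrite Hk unitrM => /andP[]. Qed.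

Lemma assoc_refl (a : D) : associates a a.
Proof. by exists 1; rewrite ?unitr1 ?mul1r. Qed.
Lemma assoc_sym (a b : D) : associates a b -> associates b a.
Proof. move=> [u uu ->]; exists u^-1; by rewrite ?unitrV ?mulKr. Qed.
Lemma assoc_trans (a b c : D) : associates a b -> associates b c -> associates a c.
Proof. move=> [u uu ->] [v uv ->]; exists (u*v); by rewrite ?unitrM ?uu ?uv ?mulrA. Qed.
Lemma assoc_cong (a a' b b' : D) : associates a a' -> associates b b' ->
  associates (a * b) (a' * b').
Proof.
move=> [u uu ->] [v uv ->]; exists (u*v); first by rewrite unitrM uu uv.
ring.
Qed.
Lemma assoc_dvd_iff (d x y : D) : associates x y -> (dvd d x <-> dvd d y).
Proof.
move=> H; split.
- move: H => [u uu ->] [k Hk]; exists (u^-1 * k).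
  by rewrite -mulrA -Hk mulKr.
- move: H => [u uu ->] [k ->]; exists (u * k); by rewrite mulrA.
Qed.
Lemma assoc_dvd_l (p q a : D) : associates p q -> dvd q a -> dvd p a.
Proof. move=> [u uu ->] [k ->]; exists (k * u^-1); by rewrite -mulrA mulKr. Qed.

Lemma dvd_big (s : seq D) x : x \in s -> dvd x (\prod_(y <- s) y).
Proof.
elim: s => // y s IH; rewrite inE big_cons => /orP [/eqP -> | /IH].
  exact: dvd_mulr (dvd_refl _).
exact: dvd_mull.
Qed.

Hypothesis HU : is_UFD D.

Lemma irr_prime (p a b : D) : irreducible_elt p -> dvd p (a * b) -> dvd p a \/ dvd p b.
Proof.
move=> Hp [c Hc].
have [p0 [pu pirr]] := Hp.
have [->|a0] := eqVneq a 0; first by left; exact: dvd0.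
have [->|b0] := eqVneq b 0; first by right; exact: dvd0.
have [ua|nua] := boolP (a \is a GRing.unit).
  right; exists (a^-1 * c); by rewrite -mulrA -Hc mulKr.
have [ub|nub] := boolP (b \is a GRing.unit).
  left; exists (c * b^-1).
  have -> : a = (a * b) / b by rewrite mulrK.
  by rewrite Hc mulrAC.
have [c0|c0] := eqVneq c 0.
  by move: Hc; rewrite c0 mul0r => /eqP; rewrite mulf_eq0 (negbTE a0) (negbTE b0).
have [uc|nuc] := boolP (c \is a GRing.unit).
  have : p = (c^-1 * a) * b by rewrite -mulrA Hc mulKr.
  move/pirr => [|]; last by rewrite (negbTE nub).
  by rewrite unitrM (negbTE nua) andbF.
have [sa [Hsa Ea]] := (proj1 HU) a a0 nua.
have [sb [Hsb Eb]] := (proj1 HU) b b0 nub.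
have [sc [Hsc Ec]] := (proj1 HU) c c0 nuc.
have Hs1 : forall x, x \in p :: sc -> irreducible_elt x.
  by move=> x; rewrite inE => /orP[/eqP ->|/Hsc].
have Hs2 : forall x, x \in sa ++ sb -> irreducible_elt x.
  by move=> x; rewrite mem_cat => /orP[/Hsa|/Hsb].
have Hprod : \prod_(y <- p :: sc) y = \prod_(y <- sa ++ sb) y.
  by rewrite big_cons big_cat /= -Ec -Ea -Eb Hc mulrC.
have [t' [Hperm [Hsize Hass]]] := (proj2 HU) _ _ Hs1 Hs2 Hprod.
have H0 : (0 < size t')%N by rewrite -Hsize.
have := Hass 0%N (ltn0Sn _) => /= Hpq.
have : nth 0 t' 0 \in sa ++ sb by rewrite (perm_mem Hperm) mem_nth.
rewrite mem_cat => /orP[/dvd_big|/dvd_big] Hd.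
- left; apply: (assoc_dvd_l Hpq); by rewrite Ea.
- right; apply: (assoc_dvd_l Hpq); by rewrite Eb.
Qed.

Definition coprime_ (a n : D) := forall d, dvd d a -> dvd d n -> d \is a GRing.unit.

Lemma euclid_seq (s : seq D) : (forall x, x \in s -> irreducible_elt x) ->
  forall a u, coprime_ a (\prod_(y <- s) y) -> dvd (\prod_(y <- s) y) (u * a) ->
  dvd (\prod_(y <- s) y) u.
Proof.
elim: s => [|p s IH] Hs a u cop H.
  by rewrite big_nil; exists u; rewrite mulr1.
have Hp : irreducible_elt p by apply: Hs; rewrite inE eqxx.
have Hs' : forall x, x \in s -> irreducible_elt x.
  by move=> x xs; apply: Hs; rewrite inE xs orbT.
move: cop H; rewrite big_cons => cop H.
have Hp0 : p != 0 by case: Hp.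
have := irr_prime Hp (dvd_trans (dvd_mulr _ (dvd_refl p)) H) => -[[u' Hu']|pa].
- have : dvd (\prod_(y <- s) y) u'.
    apply: (IH Hs' a).
    + move=> d da ds; apply: cop => //; exact: dvd_mull.
    + move: H => [c Hc]; exists c; apply: (mulIf Hp0).
      have -> : u' * a * p = (u' * p) * a by ring.
      rewrite -Hu' Hc; ring.
  rewrite Hu' => -[k ->]; exists k; ring.
- exfalso; case: Hp => _ [nu _]; move/negP: nu; apply; apply: cop => //.
  exact: dvd_mulr (dvd_refl p).
Qed.

Lemma gcd_seq (s : seq D) : (forall x, x \in s -> irreducible_elt x) ->
  forall a, exists g, is_gcd g a (\prod_(y <- s) y).
Proof.
elim: s => [|p s IH] Hs a.
  exists 1; rewrite big_nil; split; [exact: dvd_unit (unitr1 _)|split].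
    exact: dvd_refl.
  by move=> d _ H.
have Hp : irreducible_elt p by apply: Hs; rewrite inE eqxx.
have Hs' : forall x, x \in s -> irreducible_elt x.
  by move=> x xs; apply: Hs; rewrite inE xs orbT.
have Hp0 : p != 0 by case: Hp.
rewrite big_cons.
case: (classic (dvd p a)) => [[a' Ha']|npa].
- have [g' [g'a [g'P g'max]]] := IH Hs' a'.
  exists (g' * p); split; [|split].
  + by rewrite Ha'; case: g'a => k ->; exists k; ring.
  + by case: g'P => k ->; exists k; ring.
  + move=> d da dn; case: (classic (dvd p d)) => [[d' Hd']|npd].
    * subst d.
      have : dvd d' g'.
        apply: g'max.
          case: da => x Hx; exists x; apply: (mulIf Hp0); rewrite -Ha' Hx; ring.
        case: dn => y Hy; exists y; apply: (mulIf Hp0).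
        have -> : \prod_(y <- s) y * p = p * \prod_(y <- s) y by ring.
        rewrite Hy; ring.
      by case=> k ->; exists k; ring.
    * apply: dvd_mulr; apply: g'max.
      -- case: da => x Hx.
         have : dvd p (x * d) by exists a'; rewrite -Hx Ha'.
         case/(irr_prime Hp) => [[x' Hx']|//].
         exists x'; apply: (mulIf Hp0); rewrite -Ha' Hx Hx'; ring.
      -- case: dn => y Hy.
         have : dvd p (y * d) by exists (\prod_(y <- s) y); rewrite -Hy mulrC.
         case/(irr_prime Hp) => [[y' Hy']|//].
         exists y'; apply: (mulIf Hp0).
         have -> : \prod_(y <- s) y * p = p * \prod_(y <- s) y by ring.
         rewrite Hy Hy'; ring.
- have [g' [g'a [g'P g'max]]] := IH Hs' a.
  exists g'; split; [exact: g'a|split; first exact: dvd_mull].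
  move=> d da [y Hy]; apply: g'max => //.
  have : dvd p (y * d) by exists (\prod_(y <- s) y); rewrite -Hy mulrC.
  case/(irr_prime Hp) => [[y' Hy']|pd]; last by exfalso; apply: npa; exact: dvd_trans pd da.
  exists y'; apply: (mulIf Hp0).
  have -> : \prod_(y <- s) y * p = p * \prod_(y <- s) y by ring.
  rewrite Hy Hy'; ring.
Qed.

Variable m : D.
Hypothesis m0 : m != 0.
Definition Rm (a b : D) := forall u, dvd m (u * a) <-> dvd m (u * b).

Lemma gcd_ex a : exists g, is_gcd g a m.
Proof.
have [um|num] := boolP (m \is a GRing.unit).
  exists 1; split; [exact: dvd_unit (unitr1 _)|split; first exact: dvd_unit (unitr1 _)].
  move=> d _ dm; apply: dvd_unit; exact: dvd_unit_r um dm.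
have [s [Hs ->]] := (proj1 HU) m m0 num; exact: gcd_seq.
Qed.

Lemma euclid (n a u : D) : n != 0 -> coprime_ a n -> dvd n (u * a) -> dvd n u.
Proof.
move=> n0; have [un|nun] := boolP (n \is a GRing.unit).
  by move=> _ _; exact: dvd_unit.
have [s [Hs ->]] := (proj1 HU) n n0 nun; exact: euclid_seq.
Qed.

Lemma keyK g a mm : is_gcd g a m -> m = mm * g -> forall u, dvd m (u * a) <-> dvd mm u.
Proof.
move=> [[a1 Ha] [_ gmax]] Hm u.
have g0 : g != 0.
  by apply/eqP => g0; move/eqP: m0; apply; rewrite Hm g0 mulr0.
have mm0 : mm != 0.
  by apply/eqP => mm0; move/eqP: m0; apply; rewrite Hm mm0 mul0r.
split.
- move=> [c Hc]; apply: (euclid (a:=a1) mm0).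
  + move=> d da dm.
    have : dvd (d * g) g.
      apply: gmax.
        by rewrite Ha; case: da => k ->; exists k; ring.
      by rewrite Hm; case: dm => k ->; exists k; ring.
    move=> [k Hk]; apply/unitrPr; exists k; apply: (mulIf g0).
    rewrite mul1r {2}Hk; ring.
  + exists c; apply: (mulIf g0).
    transitivity (u * (a1 * g)); first ring.
    rewrite -Ha Hc Hm; ring.
- move=> [k ->]; exists (k * a1); rewrite Ha Hm; ring.
Qed.

Lemma nz_of_m x y : m = x * y -> x != 0 /\ y != 0.
Proof.
move=> Hm; split; apply/eqP => H0; move/eqP: m0; apply; by rewrite Hm H0 ?mulr0 ?mul0r.
Qed.

Lemma core ga gb a b : is_gcd ga a m -> is_gcd gb b m -> (associates ga gb <-> Rm a b).
Proof.
move=> Ga Gb.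
have [ma Hma] := Ga.2.1. have [mb Hmb] := Gb.2.1.
have Ka := keyK Ga Hma. have Kb := keyK Gb Hmb.
have [ma0 ga0] := nz_of_m Hma. have [mb0 gb0] := nz_of_m Hmb.
split.
- move=> [w uw Hw] u; rewrite Ka Kb.
  have Hmab : mb = ma * w.
    by apply: (mulIf gb0); rewrite -Hmb Hma Hw; ring.
  split; move=> [k ->].
  + exists (k * w^-1); by rewrite Hmab [ma * w]mulrC mulrA mulrVK.
  + exists (k * w); rewrite Hmab; ring.
- move=> R.
  have [x Hx] : dvd mb ma := (Kb ma).1 ((R ma).1 ((Ka ma).2 (dvd_refl ma))).
  have [y Hy] : dvd ma mb := (Ka mb).1 ((R mb).2 ((Kb mb).2 (dvd_refl mb))).
  have Hxy : y * x = 1.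
    by apply: (mulIf ma0); rewrite mul1r {2}Hx Hy; ring.
  exists y; first by apply/unitrPr; exists x.
  apply: (mulIf ma0); transitivity (ma * ga); first ring.
  rewrite -Hma Hmb Hy; ring.
Qed.

Lemma Rm_refl a : Rm a a. Proof. by []. Qed.
Lemma Rm_sym a b : Rm a b -> Rm b a. Proof. by move=> H u; split => /H. Qed.
Lemma Rm_trans a b c : Rm a b -> Rm b c -> Rm a c.
Proof. by move=> H1 H2 u; split => [/H1/H2|/H2/H1]. Qed.
Lemma Rm_of_assoc a a' : associates a a' -> Rm a a'.
Proof. move=> H u; apply: assoc_dvd_iff; exact: assoc_cong (assoc_refl u) H. Qed.
Lemma Rm_cong a a' b b' : Rm a a' -> Rm b b' -> Rm (a * b) (a' * b').
Proof.
move=> Ha Hb u.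
have -> : u * (a * b) = (u * b) * a by ring.
rewrite Ha.
have -> : u * b * a' = (u * a') * b by ring.
rewrite Hb.
have -> : u * a' * b' = u * (a' * b') by ring.
by [].
Qed.
Lemma dvd_m_iff c : dvd m c <-> Rm c 0.
Proof.
split.
- move=> H u; rewrite mulr0; split => _; [exact: dvd0|exact: dvd_mull].
- by move=> H; have := (H 1).2; rewrite !mul1r; apply; exact: dvd0.
Qed.

Lemma Dcls_eq (a b : D) : Dcls a = Dcls b <-> associates a b.
Proof. apply: (cls_eq (R := @associates D)) => [x|x y|x y z]; [exact: assoc_refl|exact: assoc_sym|exact: assoc_trans]. Qed.
Lemma Dcls_surj (X : Dp D) : exists a, X = Dcls a.
Proof. by exists (Defs.repr X); rewrite /Dcls cls_repr. Qed.
Lemma Dmul_cls (a b : D) : Dmul (Dcls a) (Dcls b) = Dcls (a * b).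
Proof.
apply: (qop_cls (R := @associates D)) => [x|x y|x y z|x y z w]; [exact: assoc_refl|exact: assoc_sym|exact: assoc_trans|exact: assoc_cong].
Qed.

Lemma gcd_assoc g a m' : associates m m' -> is_gcd g a m' -> is_gcd g a m.
Proof.
move=> H [ga [gm gmax]]; split; first by [].
split; first by apply/(assoc_dvd_iff _ H).
move=> d da dm; apply: gmax => //; by apply/(assoc_dvd_iff _ H).
Qed.

Lemma tau_char a b : tau' (Dcls m) (Dcls a) (Dcls b) <-> Rm a b.
Proof.
split.
- move=> [a' [b' [m' [ga [gb [Ea [Eb [Em [Ga [Gb Eg]]]]]]]]]].
  move/Dcls_eq: Ea => Ea; move/Dcls_eq: Eb => Eb; move/Dcls_eq: Em => Em.
  move/Dcls_eq: Eg => Eg.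
  have := (core (gcd_assoc Em Ga) (gcd_assoc Em Gb)).1 Eg => R'.
  apply: Rm_trans (Rm_of_assoc Ea) _; apply: Rm_trans R' _.
  apply: Rm_sym; exact: Rm_of_assoc Eb.
- move=> R.
  have [ga Ga] := gcd_ex a. have [gb Gb] := gcd_ex b.
  exists a, b, m, ga, gb; do 5 (split; first by []).
  apply/Dcls_eq; exact: (core Ga Gb).2.
Qed.

Definition tauM := tau' (Dcls m).
Definition E (a : D) := cls tauM (Dcls a).

Lemma tau_refl X : tauM X X.
Proof. have [a ->] := Dcls_surj X; apply/tau_char; exact: Rm_refl. Qed.
Lemma tau_sym X Y : tauM X Y -> tauM Y X.
Proof.
have [a ->] := Dcls_surj X; have [b ->] := Dcls_surj Y.
move/tau_char => H; apply/tau_char; exact: Rm_sym.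
Qed.
Lemma tau_trans X Y Z : tauM X Y -> tauM Y Z -> tauM X Z.
Proof.
have [a ->] := Dcls_surj X; have [b ->] := Dcls_surj Y; have [c ->] := Dcls_surj Z.
move/tau_char => H1 /tau_char H2; apply/tau_char; exact: Rm_trans H1 H2.
Qed.
Lemma tau_cong X X' Y Y' : tauM X X' -> tauM Y Y' -> tauM (Dmul X Y) (Dmul X' Y').
Proof.
have [a ->] := Dcls_surj X; have [b ->] := Dcls_surj Y.
have [a' ->] := Dcls_surj X'; have [b' ->] := Dcls_surj Y'.
move/tau_char => H1 /tau_char H2; rewrite !Dmul_cls; apply/tau_char; exact: Rm_cong.
Qed.

Lemma E_eq a b : E a = E b <-> Rm a b.
Proof.
rewrite /E; split.
- by move/(cls_eq tau_refl tau_sym tau_trans)/tau_char.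
- by move=> H; apply/(cls_eq tau_refl tau_sym tau_trans)/tau_char.
Qed.

Lemma E_surj (Y : quot tauM) : exists a, Y = E a.
Proof.
have [a Ha] := Dcls_surj (Defs.repr Y).
by exists a; rewrite /E -Ha cls_repr.
Qed.

Lemma E_mul a b : qop (@Dmul D) (E a) (E b) = E (a * b).
Proof.
rewrite /E (qop_cls tau_refl tau_sym tau_trans tau_cong) Dmul_cls //.
Qed.

Lemma ideal_iff c : ideal_gen (@Dmul D) (Dcls m) (Dcls c) <-> dvd m c.
Proof.
split.
- case=> [/Dcls_eq H|[[s Hs]|[[s Hs]|[s [t Hs]]]]].
  + apply/(assoc_dvd_iff _ (assoc_sym H)); exact: dvd_refl.
  + have [s' Es] := Dcls_surj s; move: Hs; rewrite Es Dmul_cls => /Dcls_eq H.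
    apply/(assoc_dvd_iff _ (assoc_sym H)); exact: dvd_mull (dvd_refl _).
  + have [s' Es] := Dcls_surj s; move: Hs; rewrite Es Dmul_cls => /Dcls_eq H.
    apply/(assoc_dvd_iff _ (assoc_sym H)); exact: dvd_mulr (dvd_refl _).
  + have [s' Es] := Dcls_surj s; have [t' Et] := Dcls_surj t.
    move: Hs; rewrite Es Et !Dmul_cls => /Dcls_eq H.
    apply/(assoc_dvd_iff _ (assoc_sym H)); exact: dvd_mulr _ (dvd_mull _ (dvd_refl _)).
- move=> [k ->]; right; left; exists (Dcls k); by rewrite Dmul_cls.
Qed.

Lemma part1 : tau' (Dcls m) = P_rel (@Dmul D) (ideal_gen (@Dmul D) (Dcls m)).
Proof.
apply: functional_extensionality => X; apply: functional_extensionality => Y.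
have [a ->] := Dcls_surj X; have [b ->] := Dcls_surj Y.
apply: propositional_extensionality; rewrite tau_char /P_rel; split.
- move=> R; apply: functional_extensionality => -[P Q] /=.
  have [p ->] := Dcls_surj P; have [q ->] := Dcls_surj Q.
  rewrite /dots /= !Dmul_cls; apply: propositional_extensionality.
  rewrite !ideal_iff.
  have -> : p * a * q = (p * q) * a by ring.
  have -> : p * b * q = (p * q) * b by ring.
  exact: R.
- move=> H u.
  have := f_equal (fun f => f (Dcls u, Dcls 1)) H; rewrite /dots /= !Dmul_cls.
  move=> /(f_equal (fun P : Prop => P)) E'.
  rewrite !mulr1 in E'.
  split => Hd.
  + by apply/ideal_iff; rewrite -E'; apply/ideal_iff.
  + by apply/ideal_iff; rewrite E'; apply/ideal_iff.
Qed.

Lemma part2 : condition_star (@qop (Dp D) (@Dmul D) tauM).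
Proof.
split.
  move=> X Y W; have [x ->] := E_surj X; have [y ->] := E_surj Y; have [w ->] := E_surj W.
  by rewrite !E_mul mulrA.
split.
  move=> X Y; have [x ->] := E_surj X; have [y ->] := E_surj Y.
  by rewrite !E_mul mulrC.
exists (E 1), (E 0); split.
  by move=> X; have [x ->] := E_surj X; rewrite !E_mul mul1r mulr1.
split.
  by move=> X; have [x ->] := E_surj X; rewrite !E_mul mul0r mulr0.
have annE : forall d u, annih (@qop (Dp D) (@Dmul D) tauM) (E 0) (E d) (E u) <-> dvd m (u * d).
  move=> d u; rewrite /annih E_mul E_eq; symmetry; exact: dvd_m_iff.
split.
- move=> S; have [d ->] := E_surj S => Hne Hann.
  apply: Hne; apply/E_eq => u.
  split; last by rewrite mulr1 => H; exact: dvd_mulr.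
  rewrite mulr1 => Hud; apply: NNPP => Hu.
  have : annih (@qop (Dp D) (@Dmul D) tauM) (E 0) (E d) (E u) by apply/annE.
  rewrite Hann => /E_eq/dvd_m_iff; exact: Hu.
- move=> S T'; have [d ->] := E_surj S; have [t ->] := E_surj T' => Hann.
  apply/E_eq => u; rewrite -!annE; by rewrite Hann.
Qed.

End UFD.

Theorem corollary3 (D : idomainType) (m : D) :
  is_UFD D -> m != 0 ->
  tau' (Dcls m) = P_rel (@Dmul D) (ideal_gen (@Dmul D) (Dcls m)) /\
  condition_star (@qop (Dp D) (@Dmul D) (tau' (Dcls m))).
Proof.
move=> HU m0; split; [exact: part1|exact: part2].
Qed.
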